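(* Let $a,d$ be real numbers and let $T_n(t,a,d)$ be the general Eulerian polynomials defined below. Then, as an identity of formal power series in $u$ with coefficients in the field $\mathbb{R}(t)$ of rational functions in $t$, $$\sum_{n\ge 0}T_n(t,a,d)\frac{u^n}{n!}=\frac{(t-1)\exp(au(t-1))}{t-\exp(du(t-1))}.$$
   Context: For real numbers $a,d$, the general Eulerian numbers $A_{n,k}(a,d)$ (integers $n\ge 0$, $k$) are defined by $A_{0,-1}(a,d)=1$, $A_{n,k}(a,d)=0$ whenever $k\ge n$ or $k\le -2$, and for $n\ge 1$, $-1\le k\le n-1$: $$A_{n,k}(a,d)=(-a+(k+2)d)A_{n-1,k}(a,d)+(a+(n-k-1)d)A_{n-1,k-1}(a,d).$$ The general Eulerian polynomials are $T_n(t,a,d)=\sum_{k=-1}^{n-1}A_{n,k}(a,d)t^{k+1}$ (so $T_0(t,a,d)=1$). Note $t-\exp(du(t-1))$ has constant term $t-1\neq 0$ in $\mathbb{R}(t)[[u]]$, hence is invertible. *)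

(* Defs.v *)
From HB Require Import structures.
From mathcomp Require Import all_boot all_order all_algebra fraction.
Set Implicit Arguments. Unset Strict Implicit. Unset Printing Implicit Defensive.
Import Order.TTheory GRing.Theory Num.Theory.
Local Open Scope ring_scope.

Section Eulerian.
Variable R : realFieldType.

Fixpoint eulerA (a d : R) (n : nat) (k : int) : R :=
  match n with
  | 0%N => if k == (-1)%R then 1 else 0
  | m.+1 =>
      if ((-1)%R <= k) && (k < n%:Z)
      then (- a + (k + 2)%:~R * d) * eulerA a d m k
           + (a + (n%:Z - k - 1)%:~R * d) * eulerA a d m (k - 1)
      else 0
  end.

(* T_n(t,a,d) = sum_{k=-1}^{n-1} A_{n,k} t^{k+1}  (index j = k+1). *)
Definition eulerT (a d : R) (n : nat) : {poly R} :=
  \sum_(j < n.+1) eulerA a d n (j%:Z - 1) *: 'X^j.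

Definition Rt := {fraction {poly R}}.
Local Notation "x %:F" := (@FracField.tofrac {poly R} x).
Definition tvar : Rt := ('X)%:F.

Definition fps := nat -> Rt.

Definition fps_mul (f g : fps) : fps :=
  fun n => \sum_(i < n.+1) f i * g (n - i)%N.
Definition fps_sub (f g : fps) : fps := fun n => f n - g n.
Definition fps_const (c : Rt) : fps := fun n => if n == 0%N then c else 0.
Definition fps_exp (c : Rt) : fps := fun n => c ^+ n / (n`!)%:R.

(* Multiplicative inverse of a series (meaningful when f 0 <> 0):
   b_0 = 1/f_0, b_n = -(1/f_0) sum_{k=1}^n f_k b_{n-k}. *)
Fixpoint fps_inv_seq (f : fps) (n : nat) : seq Rt :=
  match n with
  | 0%N => [:: (f 0%N)^-1]
  | m.+1 => let s := fps_inv_seq f m in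
      rcons s (- (f 0%N)^-1 * \sum_(k < m.+1) f k.+1 * nth 0 s (m - k)%N)
  end.
Definition fps_inv (f : fps) : fps := fun n => nth 0 (fps_inv_seq f n) n.
Definition fps_div (f g : fps) : fps := fps_mul f (fps_inv g).

Definition eulerT_egf (a d : R) : fps :=
  fun n => (eulerT a d n)%:F / (n`!)%:R.

Definition eulerT_rhs (a d : R) : fps :=
  fps_div (fps_mul (fps_const (tvar - 1)) (fps_exp ((a%:P)%:F * (tvar - 1))))
          (fps_sub (fps_const tvar) (fps_exp ((d%:P)%:F * (tvar - 1)))).

End Eulerian.

(* Main.v *)
Require Import Defs.
From HB Require Import structures.
From mathcomp Require Import all_boot all_order all_algebra fraction.
From mathcomp Require Import ring zify.
From Stdlib Require Import FunctionalExtensionality.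
Import Order.TTheory GRing.Theory Num.Theory.
Local Open Scope ring_scope.

Section Poly.
Variable R : realFieldType.
Variables a d : R.
Local Notation T := (eulerT a d).

Lemma eulerA_out n (k : int) : ((k < -1) || (n%:Z <= k)) -> eulerA a d n k = 0.
Proof.
case: n => [|n] /= H.
  by case: eqP => // Hk; rewrite Hk in H.
case: ifP => // /andP [H1 H2]; exfalso.
move: H; rewrite ltNge H1 /= leNgt H2; by [].
Qed.

Lemma coef_T n j : (T n)`_j = eulerA a d n (j%:Z - 1).
Proof.
rewrite /eulerT -(poly_def n.+1 (fun j : nat => eulerA a d n (j%:Z - 1))) coef_poly; case: ifP => // Hj.
rewrite eulerA_out //; apply/orP; right.
have : (n < j)%N by rewrite ltnNge -ltnS Hj.
  move=> Hnj; lia.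
Qed.

Definition L (m : nat) (p : {poly R}) : {poly R} :=
  (d%:P - a%:P + (a%:P + m%:R * d%:P) * 'X) * p + d%:P * 'X * (1 - 'X) * p^`().

Lemma L_nf m p : L m p = (d - a)%:P * p + (a + m%:R * d)%:P * ('X * p)
   + d%:P * ('X * p^`()) - d%:P * ('X * ('X * p^`())).
Proof. rewrite /L polyCB polyCD polyCM polyC_natr; ring. Qed.

Lemma coef_T' n (j : nat) : eulerA a d n j%:Z = (T n)`_j.+1.
Proof. by rewrite coef_T; congr eulerA; lia. Qed.

Lemma T_rec n : T n.+1 = L n (T n).
Proof.
apply/polyP => j; rewrite L_nf !(coefD, coefB, coefN, coefCM, coefXM).
case: j => [|j].
  rewrite coef_T /= -coef_T (eulerA_out n (0%Z - 1 - 1)); last by [].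
  rewrite !mulr0 !addr0 subr0; congr (_ * _).
  have -> : ((0%Z - 1 + 2)%:~R : R) = 1 by [].
  ring.
rewrite -coef_T' /= -coef_T !coef_deriv.
rewrite coef_T'; case: ifP => Hj.
  rewrite !(intrD, intrN) /=.
  case: j Hj => [|j] Hj /=; rewrite -!pmulrn. rewrite mulr1n; ring. rewrite -[(T n)`_j.+2 *+ _]mulr_natr -[(T n)`_j.+1 *+ _]mulr_natr. ring.

have Hz : forall k, (n < k)%N -> (T n)`_k = 0.
  move=> k Hk; rewrite coef_T eulerA_out //; apply/orP; right; lia.
case: j Hj => [|j] Hj //=.
rewrite !Hz //; try lia; by rewrite !mul0rn !mulr0 !addr0 subr0.
Qed.

Local Notation y := (d%:P * ('X - 1)).

Lemma L_add m p q : L m (p + q) = L m p + L m q.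
Proof. rewrite /L derivD; ring. Qed.
Lemma L_0 m : L m 0 = 0.
Proof. rewrite /L deriv0; ring. Qed.
Lemma L_Mn m p k : L m (p *+ k) = L m p *+ k.
Proof. by rewrite /L derivMn !mulrnAr mulrnDl. Qed.
Lemma L_sum m (I : finType) (F : I -> {poly R}) :
  L m (\sum_i F i) = \sum_i L m (F i).
Proof. exact: (big_morph (L m) (L_add m) (L_0 m)). Qed.

Lemma L_shift i k p : L (i + k) (y ^+ k * p) = y ^+ k * L i p.
Proof.
case: k => [|k]; first by rewrite addn0 expr0 !mul1r.
rewrite /L derivM deriv_exp /= derivM derivC derivB derivX derivC.
rewrite -[_ *+ k.+1]mulr_natr natrD exprS.

ring.
Qed.


Definition P n := \sum_(i < n.+1) (y ^+ (n - i) * T i) *+ 'C(n, i).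

Lemma P_pascal n :
  P n.+1 = y * P n + \sum_(i < n.+1) (y ^+ (n - i) * T i.+1) *+ 'C(n, i).
Proof.
rewrite /P big_ord_recl /=.
under eq_bigr do rewrite binS mulrnDr.
rewrite big_split /= addrA; congr (_ + _).
rewrite [in RHS]mulr_sumr [in RHS]big_ord_recl [in LHS]big_ord_recr /=.
rewrite (bin_small (ltnSn n)) mulr0n addr0 subn0 !bin0 !mulr1n exprS mulrA; congr (_ + _).
  by rewrite subn0.
apply: eq_bigr => i _ /=.
rewrite /bump /= !add1n subSS mulrnAr mulrA -exprS; congr (_ * _ *+ _).
have Hi : (i < n)%N := ltn_ord i.
congr (_ ^+ _); lia.
Qed.


Lemma Q_eq n :
  \sum_(i < n.+1) (y ^+ (n - i) * T i.+1) *+ 'C(n, i) = L n (P n).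
Proof.
rewrite /P L_sum; apply: eq_bigr => i _; rewrite L_Mn; congr (_ *+ _).
have := L_shift i (n - i) (T i); rewrite subnKC; last by rewrite -ltnS ltn_ord.
by move=> ->; rewrite T_rec.
Qed.

Lemma T0 : T 0 = 1.
Proof. by rewrite /eulerT big_ord1 /= expr0 scale1r. Qed.

Lemma main_id n : 'X * T n - P n = a%:P ^+ n * ('X - 1) ^+ n.+1.
Proof.
elim: n => [|n IH].
  rewrite /P big_ord1 /= T0 expr0 !mul1r mulr1 mulr1n expr1 //.
have HP : P n = 'X * T n - a%:P ^+ n * ('X - 1) ^+ n.+1 by rewrite -IH; ring.
rewrite P_pascal Q_eq T_rec HP /L.
have D1 : (1 : {poly R})^`() = 0 by rewrite -polyC1 derivC.
rewrite !(derivD, derivN, derivM, derivX, deriv_exp, D1, derivC) /=.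
rewrite !(mul0r, mul0rn, add0r, subr0, mul1r) -[_ *+ n.+1]mulr_natr.
rewrite !exprS.
ring.
Qed.

End Poly.

Section Fps.
Variable R : realFieldType.
Implicit Types (f g : fps R).
Local Notation Rt := (Rt R).
Local Notation fps := (fps R).

Lemma size_inv_seq (f : fps) n : size (fps_inv_seq f n) = n.+1.
Proof. by elim: n => [|n IH] //=; rewrite size_rcons IH. Qed.

Lemma nth_inv_seq (f : fps) n k : (k <= n)%N -> nth 0 (fps_inv_seq f n) k = fps_inv f k.
Proof.
elim: n => [|n IH] Hk.
  by move: Hk; rewrite leqn0 => /eqP ->.
case: (ltngtP k n.+1) => [Hlt | Hgt | ->] //.
  rewrite /= nth_rcons size_inv_seq Hlt; exact: IH.
by move: Hk; rewrite leqNgt Hgt.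
Qed.

Lemma inv_rec (f : fps) m : fps_inv f m.+1 =
  - (f 0%N)^-1 * \sum_(k < m.+1) f k.+1 * fps_inv f (m - k)%N.
Proof.
rewrite /fps_inv /= nth_rcons size_inv_seq ltnn eqxx; congr (_ * _).
apply: eq_bigr => k _; rewrite nth_inv_seq // leq_subr //.
Qed.

Lemma mul_inv (f : fps) n : f 0%N != 0 -> fps_mul f (fps_inv f) n = (n == 0%N)%:R.
Proof.
move=> H0; case: n => [|m].
  by rewrite /fps_mul big_ord1 /= /fps_inv /= mulfV.
rewrite /fps_mul big_ord_recl /= subn0 inv_rec.
under eq_bigr do rewrite /bump /= add1n subSS.
by rewrite mulrA mulrN mulfV // mulN1r addNr.
Qed.

Definition tr (f : fps) n : {poly Rt} := \poly_(i < n.+1) f i.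
Definition agree n (p q : {poly Rt}) := forall j, (j <= n)%N -> p`_j = q`_j.

Lemma coef_tr (f : fps) n j : (j <= n)%N -> (tr f n)`_j = f j.
Proof. by move=> H; rewrite /tr coef_poly ltnS H. Qed.

Lemma coef_tr_mul (f g : fps) n j : (j <= n)%N -> (tr f n * tr g n)`_j = fps_mul f g j.
Proof.
move=> H; rewrite coefM /fps_mul; apply: eq_bigr => i _.
have Hi : (i <= j)%N by rewrite -ltnS ltn_ord.
rewrite !coef_tr //; [lia|lia].
Qed.

Lemma agreeMr n p q r : agree n p q -> agree n (p * r) (q * r).
Proof.
move=> H j Hj; rewrite !coefM; apply: eq_bigr => i _.
have Hi : (i <= j)%N by rewrite -ltnS ltn_ord.
rewrite H //; lia.
Qed.

Lemma agreeMl n p q r : agree n p q -> agree n (r * p) (r * q).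
Proof.
move=> H j Hj; rewrite !coefM; apply: eq_bigr => i _.
have Hi : (i <= j)%N by rewrite -ltnS ltn_ord.
rewrite H //; lia.
Qed.

Lemma fps_unique (g D N : fps) : D 0%N != 0 ->
  (forall n, fps_mul g D n = N n) -> forall n, g n = fps_div N D n.
Proof.
move=> HD H n.
rewrite /fps_div -(@coef_tr_mul N (fps_inv D) n n (leqnn n)) -(@coef_tr g n n (leqnn n)).
rewrite -[tr g n]mulr1.
have A1 : agree n 1 (tr D n * tr (fps_inv D) n).
  by move=> j Hj; rewrite coef_tr_mul // mul_inv // coef1.
rewrite (@agreeMl n _ _ (tr g n) A1) // mulrA.
have A2 : agree n (tr g n * tr D n) (tr N n).
  by move=> j Hj; rewrite coef_tr_mul // H coef_tr.
by rewrite (@agreeMr n _ _ (tr (fps_inv D) n) A2).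
Qed.

End Fps.

Section Key.
Variable R : realFieldType.
Variables a d : R.
Local Notation F := (@FracField.tofrac {poly R}).
Local Notation T := (eulerT a d).

Lemma natRt_neq0 m : (0 < m)%N -> (m%:R : Rt R) != 0.
Proof.
move=> Hm; rewrite -(rmorph_nat F) tofrac_eq0 -polyC_natr polyC_eq0 pnatr_eq0.
by rewrite -lt0n.
Qed.

Lemma fld_aux (K : fieldType) (A Y c u v : K) : c != 0 -> u != 0 -> v != 0 ->
  A / u * (Y / v) = Y * A * c / (c * (u * v)).
Proof. by move=> Hc Hu Hv; field; rewrite Hc Hu Hv. Qed.

Lemma key n :
  fps_mul (eulerT_egf a d)
     (fps_sub (fps_const (tvar R)) (fps_exp (F (d%:P) * (tvar R - 1)))) n =
  fps_mul (fps_const (tvar R - 1)) (fps_exp (F (a%:P) * (tvar R - 1))) n.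
Proof.
have Hf : forall m, ((m`!)%:R : Rt R) != 0 by move=> m; apply: natRt_neq0; exact: fact_gt0.
have MI := congr1 F (@main_id R a d n).
rewrite rmorphB !rmorphM !rmorphXn rmorphB rmorph1 in MI.
rewrite {2}/fps_mul big_ord_recl big1 => [|i _]; last by rewrite /fps_const /= mul0r.
rewrite addr0 /fps_const /fps_exp /= subn0.
have S2 : \sum_(i < n.+1) F (T i) / (i`!)%:R *
    ((F d%:P * (tvar R - 1)) ^+ (n - i) / ((n - i)`!)%:R) = F (P R a d n) / (n`!)%:R.
  rewrite /P rmorph_sum mulr_suml; apply: eq_bigr => i _.
  have Hi : (i <= n)%N by rewrite -ltnS ltn_ord.
  have E : forall p q : {poly R}, F (p * q) = F p * F q by move=> p q; exact: rmorphM.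
  rewrite rmorphMn.
  rewrite [X in X *+ _ / _](_ : _ = (F d%:P * (F 'X - 1)) ^+ (n - i) * F (T i)); last first.
    by rewrite /= E tofracXn tofracM tofracB tofrac1.
  rewrite -(bin_fact Hi) -[_ *+ 'C(n, i)]mulr_natr !natrM /tvar.
  apply: fld_aux; rewrite ?Hf //; apply: natRt_neq0; by rewrite bin_gt0.
rewrite /fps_mul /fps_sub /eulerT_egf.
under eq_bigr do rewrite mulrBr.
rewrite sumrB S2 big_ord_recr /= subnn eqxx big1 => [|i _]; last first.
  by rewrite subn_eq0 leqNgt ltn_ord mulr0.
rewrite add0r /tvar.
have MI' : F 'X * F (T n) - F (P R a d n) = F a%:P ^+ n * (F 'X - 1) ^+ n.+1 by exact: MI.
rewrite [_ / _ * _]mulrAC [_ * F 'X]mulrC -mulrBl MI' exprMn exprS !mulrA.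
congr (_ * _); ring.
Qed.
End Key.

Theorem lemma3p3 (R : realFieldType) (a d : R) :
  eulerT_egf a d = eulerT_rhs a d.
Proof.
apply: functional_extensionality => n.
rewrite /eulerT_rhs; apply: fps_unique; last exact: key.
rewrite /fps_sub /fps_const /fps_exp /= expr0 divr1 /tvar -tofrac1 -tofracB tofrac_eq0 subr_eq0.
apply/eqP => /(congr1 (size : {poly R} -> nat)); by rewrite size_polyX size_poly1.
Qed.
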